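(* For all integers $n>1$ and $k>n$ we have $3F(n,k)\le2F(n,k+1)$, with equality if and only if $n=2$ and $k=4$.
   Context: For positive integers $n,k$, the generalized Fibonacci numbers are defined by $F(n,k)=0$ if $1\le k<n$, $F(n,k)=1$ if $k=n$, and $F(n,k)=\sum_{j=1}^nF(n,k-j)$ if $k>n$. *)

(* Defs.v *)
From mathcomp Require Import all_boot.
Set Implicit Arguments. Unset Strict Implicit. Unset Printing Implicit Defensive.

(* We compute the list [F n 0; F n 1; ...; F n k] by structural recursion
   (the value at k = 0 is irrelevant to the paper and set to 0; it is never
   used by the recurrence since k > n implies k - j >= 1 for j <= n). *)
Fixpoint genfib_list (n k : nat) : seq nat :=
  match k with
  | 0 => [:: 0]
  | k'.+1 =>
      let s := genfib_list n k' in
      let v := if k'.+1 < n then 0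
               else if k'.+1 == n then 1
               else \sum_(1 <= j < n.+1) nth 0 s (k'.+1 - j) in
      rcons s v
  end.

Definition F (n k : nat) : nat := nth 0 (genfib_list n k) k.

Example F_2_check : [seq F 2 k | k <- iota 1 8] = [:: 0; 1; 1; 2; 3; 5; 8; 13].
Proof. by rewrite /F /= unlock. Qed.
Example F_3_check : [seq F 3 k | k <- iota 1 8] = [:: 0; 0; 1; 1; 2; 4; 7; 13].
Proof. by rewrite /F /= unlock. Qed.

(* Main.v *)
Require Import Defs.
From mathcomp Require Import all_boot.
From mathcomp Require Import zify.

Lemma size_gl n k : size (genfib_list n k) = k.+1.
Proof. by elim: k => [|k IH] //=; rewrite size_rcons IH. Qed.

Lemma nth_gl n k i : i <= k -> nth 0 (genfib_list n k) i = F n i.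
Proof.
elim: k => [|k IH] hi.
  by move: hi; rewrite leqn0 => /eqP ->.
case: (ltngtP i k.+1) => [hlt|hgt|->]; [|lia|by []].
by rewrite [genfib_list n k.+1]/= nth_rcons size_gl hlt IH.
Qed.

Lemma F_rec n k : 0 < k -> F n k = if k < n then 0 else if k == n then 1
  else \sum_(1 <= j < n.+1) F n (k - j).
Proof.
case: k => [//|k] _.
rewrite /F [genfib_list n k.+1]/= nth_rcons size_gl ltnn eqxx.
case: ifP => // _; case: ifP => // _.
apply: eq_big_nat => j /andP[j1 _]; rewrite nth_gl //; lia.
Qed.

Lemma F_lt n k : k < n -> F n k = 0.
Proof.
case: k => [|k] h; first by [].
by rewrite F_rec // h.
Qed.

Lemma F_nn n : 0 < n -> F n n = 1.
Proof. by move=> h; rewrite F_rec // ltnn eqxx. Qed.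

Lemma F_big n k : n < k -> F n k = \sum_(1 <= j < n.+1) F n (k - j).
Proof.
move=> h; rewrite F_rec; last lia.
have -> : (k < n) = false by lia.
by have -> : (k == n) = false by lia.
Qed.

Lemma F_step n k : 0 < n -> n <= k -> F n k <= F n k.+1.
Proof.
move=> n0 h; rewrite (@F_big n (k.+1)) //.
rewrite big_ltn; last lia.
have -> : k.+1 - 1 = k by lia.
exact: leq_addr.
Qed.

Lemma F_mono n a b : 0 < n -> 0 < a -> a <= b -> F n a <= F n b.
Proof.
move=> n0 a0; elim: b => [|b IH] hab; first lia.
case: (ltngtP a b.+1) => [hlt||->] //; last lia.
apply: leq_trans (IH _) _; first lia.
case: (leqP n b) => hb; first exact: F_step.
rewrite F_lt //; lia.
Qed.

Lemma F_pos n m : 0 < n -> n <= m -> 0 < F n m.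
Proof. by move=> h hm; rewrite -(@F_nn n h); exact: F_mono. Qed.

Lemma F_key n k : 0 < n -> n < k -> F n k.+1 + F n (k - n) = 2 * F n k.
Proof.
move=> n0 hk.
rewrite (@F_big n (k.+1)); last lia.
rewrite (@F_big n k hk).
rewrite big_nat_recl // subSS subn0.
have -> : \sum_(1 <= i < n) F n (k.+1 - i.+1) = \sum_(1 <= i < n) F n (k - i).
  by apply: eq_bigr => i _; rewrite subSS.
case: n n0 hk => [//|n] _ hk.
rewrite [X in _ = 2 * X]big_nat_recr //=. have e := @F_big n.+1 k hk. rewrite big_nat_recr //= in e. lia.
Qed.

Lemma F_split n k : 1 < n -> n < k ->
  F n k = F n (k - 1) + \sum_(2 <= j < n) F n (k - j) + F n (k - n).
Proof.
move=> n1 hk; rewrite (@F_big n k hk).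
case: n n1 hk => [//|n] n1 hk.
rewrite big_nat_recr //= big_ltn //.
Qed.

Theorem mainTheorem16 (n k : nat) :
  1 < n -> n < k ->
  3 * F n k <= 2 * F n k.+1 /\ (3 * F n k = 2 * F n k.+1 <-> n = 2 /\ k = 4).
Proof.
move=> n1 hk.
have hkey := @F_key n k (ltnW n1) hk.
have hsp := @F_split n k n1 hk.
have hdc : F n (k - n) <= F n (k - 1) by apply: F_mono; lia.
split; first lia.
split; last first.
  by case=> -> ->; rewrite /F /= unlock.
move=> heq.
have hd : F n (k - 1) = F n (k - n) by lia.
have hM : \sum_(2 <= j < n) F n (k - j) = 0 by lia.
case: (ltngtP n 2) => [|hn3|hn2]; first lia.
-
  exfalso.
  case: (ltngtP k n.+1) => [|hk2|hk1]; first lia.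
  + move: hM; rewrite big_ltn // => hM.
    have := @F_pos n (k - 2) (ltnW n1); lia.
  + subst k; move: hd.
    have -> : n.+1 - 1 = n by lia.
    have -> : n.+1 - n = 1 by lia.
    by rewrite F_nn ?F_lt //; lia.
- subst n; split => //.
  case: (ltngtP k 4) => [hk3|hk5|//]; exfalso.
  + have e3 : k = 3 by lia. subst k.
    by move: hd; rewrite /F /= ?unlock.
  + move: hd; rewrite (@F_big 2 (k-1)); last lia.
    rewrite big_ltn // big_ltn // big_geq //.
    have -> : k - 1 - 1 = k - 2 by lia.
    have := @F_pos 2 (k - 1 - 2) erefl; lia.
Qed.
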